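(* For all $\lambda\mu\mathrm{T}$-terms $t_1,t_2,t_3$: if $t_1\to_B t_2\to_A t_3$, then there is a term $t_4$ with $t_1\to_A t_4$ and $t_4\twoheadrightarrow_{AB}t_3$. Consequently, if $t_1\twoheadrightarrow_B t_2\to_A t_3$, then there is $t_4$ with $t_1\to_A t_4\twoheadrightarrow_{AB} t_3$.
   Context: The calculus $\lambda\mu\mathrm{T}$ (raw terms). Types: $\rho,\sigma,\tau ::= \mathbb{N} \mid \sigma\to\tau$. Over infinite sets of $\lambda$-variables $x,y,\dots$ and $\mu$-variables $\alpha,\beta,\gamma,\dots$, terms and commands are mutually defined by $t,r,s ::= x \mid \lambda x{:}\rho.r \mid t\,s \mid \mu\alpha{:}\rho.c \mid 0 \mid \mathsf{S}\,t \mid \mathsf{nrec}_\rho\ r\ s\ t$ and $c ::= [\alpha]t$. Terms are considered modulo renaming of bound variables; $FCV(t)$ = free $\mu$-variables; $t[x:=r]$ is capture-avoiding substitution. Numerals: $\underline{n} := \mathsf{S}^n 0$. Contexts: $E ::= \Box \mid E\,t \mid \mathsf{S}\,E \mid \mathsf{nrec}\ r\ s\ E$; $E[u]$ fills the hole with $u$. Structural substitution $t[\alpha:=\beta E]$ is homomorphic on all constructs (capture-avoiding) except $([\alpha]u)[\alpha:=\beta E] := [\beta]E[u[\alpha:=\beta E]]$ (and $([\gamma]u)[\alpha:=\beta E]:=[\gamma](u[\alpha:=\beta E])$ for $\gamma\neq\alpha$). $\to_A$ is the compatible closure (on terms and commands) of: $(\lambda x.t)r\to t[x:=r]$; $\mathsf{S}(\mu\alpha.c)\to\mu\alpha.c[\alpha:=\alpha(\mathsf{S}\,\Box)]$;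 $(\mu\alpha.c)s\to\mu\alpha.c[\alpha:=\alpha(\Box\,s)]$; $\mathsf{nrec}\ r\ s\ 0\to r$; $\mathsf{nrec}\ r\ s\ (\mathsf{S}\,\underline{n})\to s\ \underline{n}\ (\mathsf{nrec}\ r\ s\ \underline{n})$; $\mathsf{nrec}\ r\ s\ (\mu\alpha.c)\to\mu\alpha.c[\alpha:=\alpha(\mathsf{nrec}\ r\ s\ \Box)]$. $\to_B$ is the compatible closure of $\mu\alpha.[\alpha]t\to t$ (if $\alpha\notin FCV(t)$) and $[\alpha]\mu\beta.c\to c[\beta:=\alpha\,\Box]$. $\to_{AB}:=\to_A\cup\to_B$; $\twoheadrightarrow_X$ denotes the reflexive–transitive closure of $\to_X$. *)

(* Defs.v *)
(* The calculus lambda-mu-T, raw terms, locally nameless via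
   de Bruijn indices (two separate index spaces: lambda-variables and
   mu-variables). *)
From Stdlib Require Import Arith Relations.

(* Types (kept for reference; reduction does not depend on them). *)
Inductive ty : Type := TNat | TArr (s t : ty).

(* Terms and commands.  [var n]: lambda-variable (de Bruijn index);
   [lam t]: lambda x. t (binds lambda-index 0 in t);
   [mu c]: mu alpha. c (binds mu-index 0 in c);
   [named a t]: the command [a] t with a a mu-variable index. *)
Inductive tm : Type :=
| var (n : nat)
| lam (t : tm)
| app (t s : tm)
| mu (c : cmd)
| zero
| succ (t : tm)
| nrec (r s t : tm)
with cmd : Type :=
| named (a : nat) (t : tm).

Fixpoint numeral (n : nat) : tm :=
  match n with O => zero | S n => succ (numeral n) end.

Fixpoint lift (k : nat) (t : tm) : tm :=
  match t with
  | var n => if k <=? n then var (S n) else var n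
  | lam t => lam (lift (S k) t)
  | app t s => app (lift k t) (lift k s)
  | mu c => mu (lift_c k c)
  | zero => zero
  | succ t => succ (lift k t)
  | nrec r s t => nrec (lift k r) (lift k s) (lift k t)
  end
with lift_c (k : nat) (c : cmd) : cmd :=
  match c with named a t => named a (lift k t) end.

Fixpoint mlift (k : nat) (t : tm) : tm :=
  match t with
  | var n => var n
  | lam t => lam (mlift k t)
  | app t s => app (mlift k t) (mlift k s)
  | mu c => mu (mlift_c (S k) c)
  | zero => zero
  | succ t => succ (mlift k t)
  | nrec r s t => nrec (mlift k r) (mlift k s) (mlift k t)
  end
with mlift_c (k : nat) (c : cmd) : cmd :=
  match c with
  | named a t => named (if k <=? a then S a else a) (mlift k t)
  end.

(* removal of an (unused) mu-variable k: free mu-variables > k decrease *)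
Fixpoint mlower (k : nat) (t : tm) : tm :=
  match t with
  | var n => var n
  | lam t => lam (mlower k t)
  | app t s => app (mlower k t) (mlower k s)
  | mu c => mu (mlower_c (S k) c)
  | zero => zero
  | succ t => succ (mlower k t)
  | nrec r s t => nrec (mlower k r) (mlower k s) (mlower k t)
  end
with mlower_c (k : nat) (c : cmd) : cmd :=
  match c with
  | named a t => named (if k <? a then pred a else a) (mlower k t)
  end.

Fixpoint mfree (k : nat) (t : tm) : bool :=
  match t with
  | var _ => false
  | lam t => mfree k t
  | app t s => mfree k t || mfree k s
  | mu c => mfree_c (S k) c
  | zero => false
  | succ t => mfree k t
  | nrec r s t => mfree k r || mfree k s || mfree k t
  end
with mfree_c (k : nat) (c : cmd) : bool :=
  match c with named a t => (a =? k) || mfree k t end.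

(* capture-avoiding substitution t[j := r] of the lambda-variable j,
   with free lambda-variables above j decremented (the binder is consumed) *)
Fixpoint subst (j : nat) (r : tm) (t : tm) : tm :=
  match t with
  | var n => if n =? j then r else if j <? n then var (pred n) else var n
  | lam t => lam (subst (S j) (lift 0 r) t)
  | app t s => app (subst j r t) (subst j r s)
  | mu c => mu (subst_c j (mlift 0 r) c)
  | zero => zero
  | succ t => succ (subst j r t)
  | nrec r' s t => nrec (subst j r r') (subst j r s) (subst j r t)
  end
with subst_c (j : nat) (r : tm) (c : cmd) : cmd :=
  match c with named a t => named a (subst j r t) end.

Inductive ctx : Type :=
| Hole
| CApp (E : ctx) (t : tm)
| CSucc (E : ctx)
| CNrec (r s : tm) (E : ctx).

Fixpoint plug (E : ctx) (u : tm) : tm :=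
  match E with
  | Hole => u
  | CApp E t => app (plug E u) t
  | CSucc E => succ (plug E u)
  | CNrec r s E => nrec r s (plug E u)
  end.

Fixpoint liftE (k : nat) (E : ctx) : ctx :=
  match E with
  | Hole => Hole
  | CApp E t => CApp (liftE k E) (lift k t)
  | CSucc E => CSucc (liftE k E)
  | CNrec r s E => CNrec (lift k r) (lift k s) (liftE k E)
  end.

Fixpoint mliftE (k : nat) (E : ctx) : ctx :=
  match E with
  | Hole => Hole
  | CApp E t => CApp (mliftE k E) (mlift k t)
  | CSucc E => CSucc (mliftE k E)
  | CNrec r s E => CNrec (mlift k r) (mlift k s) (mliftE k E)
  end.

(* structural substitution t[j := b E]: every command [j]u becomes
   [b] E[u[j := b E]]; other commands are traversed homomorphically.
   (Capture avoidance: indices and the terms of E are shifted under binders.) *)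
Fixpoint ssub (j b : nat) (E : ctx) (t : tm) : tm :=
  match t with
  | var n => var n
  | lam t => lam (ssub j b (liftE 0 E) t)
  | app t s => app (ssub j b E t) (ssub j b E s)
  | mu c => mu (ssub_c (S j) (S b) (mliftE 0 E) c)
  | zero => zero
  | succ t => succ (ssub j b E t)
  | nrec r s t => nrec (ssub j b E r) (ssub j b E s) (ssub j b E t)
  end
with ssub_c (j b : nat) (E : ctx) (c : cmd) : cmd :=
  match c with
  | named a u =>
      if a =? j then named b (plug E (ssub j b E u))
      else named a (ssub j b E u)
  end.

Inductive rootA : tm -> tm -> Prop :=
| rA_beta t r : rootA (app (lam t) r) (subst 0 r t)
| rA_succ c : rootA (succ (mu c)) (mu (ssub_c 0 0 (CSucc Hole) c))
| rA_app c s : rootA (app (mu c) s) (mu (ssub_c 0 0 (CApp Hole (mlift 0 s)) c))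
| rA_nrec0 r s : rootA (nrec r s zero) r
| rA_nrecS r s n :
    rootA (nrec r s (succ (numeral n)))
          (app (app s (numeral n)) (nrec r s (numeral n)))
| rA_nrecmu r s c :
    rootA (nrec r s (mu c))
          (mu (ssub_c 0 0 (CNrec (mlift 0 r) (mlift 0 s) Hole) c)).

Inductive rootA_c : cmd -> cmd -> Prop := .

Inductive rootB : tm -> tm -> Prop :=
| rB_eta t : mfree 0 t = false -> rootB (mu (named 0 t)) (mlower 0 t).

Inductive rootB_c : cmd -> cmd -> Prop :=
| rB_named a c : rootB_c (named a (mu c)) (mlower_c 0 (ssub_c 0 (S a) Hole c)).

Inductive compat (R : tm -> tm -> Prop) (Rc : cmd -> cmd -> Prop)
  : tm -> tm -> Prop :=
| c_root t t' : R t t' -> compat R Rc t t'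
| c_lam t t' : compat R Rc t t' -> compat R Rc (lam t) (lam t')
| c_appl t t' s : compat R Rc t t' -> compat R Rc (app t s) (app t' s)
| c_appr t s s' : compat R Rc s s' -> compat R Rc (app t s) (app t s')
| c_mu c c' : compat_c R Rc c c' -> compat R Rc (mu c) (mu c')
| c_succ t t' : compat R Rc t t' -> compat R Rc (succ t) (succ t')
| c_nrec1 r r' s t : compat R Rc r r' -> compat R Rc (nrec r s t) (nrec r' s t)
| c_nrec2 r s s' t : compat R Rc s s' -> compat R Rc (nrec r s t) (nrec r s' t)
| c_nrec3 r s t t' : compat R Rc t t' -> compat R Rc (nrec r s t) (nrec r s t')
with compat_c (R : tm -> tm -> Prop) (Rc : cmd -> cmd -> Prop)
  : cmd -> cmd -> Prop :=
| cc_root c c' : Rc c c' -> compat_c R Rc c c'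
| cc_named a t t' : compat R Rc t t' -> compat_c R Rc (named a t) (named a t').

Definition stepA : tm -> tm -> Prop := compat rootA rootA_c.
Definition stepB : tm -> tm -> Prop := compat rootB rootB_c.
Definition stepAB (t u : tm) : Prop := stepA t u \/ stepB t u.

Definition redB : tm -> tm -> Prop := clos_refl_trans tm stepB.
Definition redAB : tm -> tm -> Prop := clos_refl_trans tm stepAB.

(* Main.v *)
Require Import Defs.
From Stdlib Require Import Arith Relations Lia FunctionalExtensionality.


Scheme tm_ind2 := Induction for tm Sort Prop
 with cmd_ind2 := Induction for cmd Sort Prop.
Combined Scheme tmcmd_ind from tm_ind2, cmd_ind2.

Definition upr (xi : nat -> nat) (n : nat) : nat :=
  match n with 0 => 0 | S n => S (xi n) end.

Fixpoint ren (xi : nat -> nat) (t : tm) : tm :=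
  match t with
  | var n => var (xi n)
  | lam t => lam (ren (upr xi) t)
  | app t s => app (ren xi t) (ren xi s)
  | mu c => mu (ren_c xi c)
  | zero => zero
  | succ t => succ (ren xi t)
  | nrec r s t => nrec (ren xi r) (ren xi s) (ren xi t)
  end
with ren_c (xi : nat -> nat) (c : cmd) : cmd :=
  match c with named a t => named a (ren xi t) end.

Fixpoint renE xi E :=
  match E with
  | Hole => Hole
  | CApp E t => CApp (renE xi E) (ren xi t)
  | CSucc E => CSucc (renE xi E)
  | CNrec r s E => CNrec (ren xi r) (ren xi s) (renE xi E)
  end.

Fixpoint mren (z : nat -> nat) (t : tm) : tm :=
  match t with
  | var n => var n
  | lam t => lam (mren z t)
  | app t s => app (mren z t) (mren z s)
  | mu c => mu (mren_c (upr z) c)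
  | zero => zero
  | succ t => succ (mren z t)
  | nrec r s t => nrec (mren z r) (mren z s) (mren z t)
  end
with mren_c (z : nat -> nat) (c : cmd) : cmd :=
  match c with named a t => named (z a) (mren z t) end.

Fixpoint mrenE z E :=
  match E with
  | Hole => Hole
  | CApp E t => CApp (mrenE z E) (mren z t)
  | CSucc E => CSucc (mrenE z E)
  | CNrec r s E => CNrec (mren z r) (mren z s) (mrenE z E)
  end.

Definition thlam (th : nat -> nat * ctx) (a : nat) : nat * ctx :=
  (fst (th a), renE S (snd (th a))).
Definition thup (th : nat -> nat * ctx) (a : nat) : nat * ctx :=
  match a with 0 => (0, Hole) | S a => (S (fst (th a)), mrenE S (snd (th a))) end.

Fixpoint ms (th : nat -> nat * ctx) (t : tm) : tm :=
  match t with
  | var n => var n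
  | lam t => lam (ms (thlam th) t)
  | app t s => app (ms th t) (ms th s)
  | mu c => mu (ms_c (thup th) c)
  | zero => zero
  | succ t => succ (ms th t)
  | nrec r s t => nrec (ms th r) (ms th s) (ms th t)
  end
with ms_c (th : nat -> nat * ctx) (c : cmd) : cmd :=
  match c with named a u => named (fst (th a)) (plug (snd (th a)) (ms th u)) end.

Fixpoint msE th E :=
  match E with
  | Hole => Hole
  | CApp E t => CApp (msE th E) (ms th t)
  | CSucc E => CSucc (msE th E)
  | CNrec r s E => CNrec (ms th r) (ms th s) (msE th E)
  end.

Definition upl (s : nat -> tm) (n : nat) : tm :=
  match n with 0 => var 0 | S n => ren S (s n) end.

Fixpoint ls (s : nat -> tm) (t : tm) : tm :=
  match t with
  | var n => s n
  | lam t => lam (ls (upl s) t)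
  | app t u => app (ls s t) (ls s u)
  | mu c => mu (ls_c (fun n => mren S (s n)) c)
  | zero => zero
  | succ t => succ (ls s t)
  | nrec r u t => nrec (ls s r) (ls s u) (ls s t)
  end
with ls_c (s : nat -> tm) (c : cmd) : cmd :=
  match c with named a u => named a (ls s u) end.

Fixpoint lsE s E :=
  match E with
  | Hole => Hole
  | CApp E t => CApp (lsE s E) (ls s t)
  | CSucc E => CSucc (lsE s E)
  | CNrec r u E => CNrec (ls s r) (ls s u) (lsE s E)
  end.

Fixpoint cc (F E : ctx) : ctx :=
  match F with
  | Hole => E
  | CApp F t => CApp (cc F E) t
  | CSucc F => CSucc (cc F E)
  | CNrec r s F => CNrec r s (cc F E)
  end.

Lemma plug_cc F E u : plug (cc F E) u = plug F (plug E u).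
Proof. induction F; simpl; congruence. Qed.
Lemma plug_ren xi E u : ren xi (plug E u) = plug (renE xi E) (ren xi u).
Proof. induction E; simpl; congruence. Qed.
Lemma plug_mren z E u : mren z (plug E u) = plug (mrenE z E) (mren z u).
Proof. induction E; simpl; congruence. Qed.
Lemma plug_ms th E u : ms th (plug E u) = plug (msE th E) (ms th u).
Proof. induction E; simpl; congruence. Qed.
Lemma plug_ls s E u : ls s (plug E u) = plug (lsE s E) (ls s u).
Proof. induction E; simpl; congruence. Qed.

Lemma ren_ren : (forall t xi xi', ren xi (ren xi' t) = ren (fun n => xi (xi' n)) t)
  /\ (forall c xi xi', ren_c xi (ren_c xi' c) = ren_c (fun n => xi (xi' n)) c).
Proof.
  apply tmcmd_ind; intros; simpl; try solve [f_equal; eauto].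
  rewrite H. f_equal. f_equal. extensionality n; destruct n; reflexivity.
Qed.

Lemma mren_mren : (forall t z z', mren z (mren z' t) = mren (fun n => z (z' n)) t)
  /\ (forall c z z', mren_c z (mren_c z' c) = mren_c (fun n => z (z' n)) c).
Proof.
  apply tmcmd_ind; intros; simpl; try solve [f_equal; eauto].
  rewrite H. f_equal. f_equal. extensionality n; destruct n; reflexivity.
Qed.

Lemma ren_mren : (forall t xi z, ren xi (mren z t) = mren z (ren xi t))
  /\ (forall c xi z, ren_c xi (mren_c z c) = mren_c z (ren_c xi c)).
Proof. apply tmcmd_ind; intros; simpl; try solve [f_equal; eauto]. Qed.

Lemma mren_id : (forall t, mren (fun n => n) t = t) /\ (forall c, mren_c (fun n => n) c = c).
Proof.
  apply tmcmd_ind; intros; simpl; try solve [f_equal; eauto].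
  replace (upr (fun n => n)) with (fun n : nat => n) by (extensionality n; destruct n; reflexivity).
  congruence.
Qed.

Lemma renE_ren xi xi' E : renE xi (renE xi' E) = renE (fun n => xi (xi' n)) E.
Proof. induction E; simpl; rewrite ?(proj1 ren_ren); congruence. Qed.
Lemma mrenE_mren z z' E : mrenE z (mrenE z' E) = mrenE (fun n => z (z' n)) E.
Proof. induction E; simpl; rewrite ?(proj1 mren_mren); congruence. Qed.
Lemma renE_mren xi z E : renE xi (mrenE z E) = mrenE z (renE xi E).
Proof. induction E; simpl; rewrite ?(proj1 ren_mren); congruence. Qed.
Lemma mrenE_id E : mrenE (fun n => n) E = E.
Proof. induction E; simpl; rewrite ?(proj1 mren_id); congruence. Qed.
Lemma renE_cc xi F E : renE xi (cc F E) = cc (renE xi F) (renE xi E).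
Proof. induction F; simpl; congruence. Qed.
Lemma mrenE_cc z F E : mrenE z (cc F E) = cc (mrenE z F) (mrenE z E).
Proof. induction F; simpl; congruence. Qed.
Lemma cc_Hole E : cc E Hole = E.
Proof. induction E; simpl; congruence. Qed.

Definition renth xi (th : nat -> nat * ctx) a := (fst (th a), renE xi (snd (th a))).

Lemma ren_ms : (forall t xi th, ren xi (ms th t) = ms (renth xi th) (ren xi t))
  /\ (forall c xi th, ren_c xi (ms_c th c) = ms_c (renth xi th) (ren_c xi c)).
Proof.
  apply tmcmd_ind; intros; simpl; try solve [f_equal; eauto].
  - rewrite H. f_equal. f_equal. extensionality a. unfold renth, thlam; simpl.
    rewrite !renE_ren. reflexivity.
  - rewrite H. f_equal. f_equal. extensionality a. unfold renth, thup; destruct a; simpl;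
    [reflexivity| rewrite renE_mren; reflexivity].
  - rewrite plug_ren, H. reflexivity.
Qed.

Lemma ms_mren : (forall t th z, ms th (mren z t) = ms (fun a => th (z a)) t)
  /\ (forall c th z, ms_c th (mren_c z c) = ms_c (fun a => th (z a)) c).
Proof.
  apply tmcmd_ind; intros; simpl; try solve [f_equal; eauto].
  all: rewrite H; repeat f_equal; extensionality a; destruct a; reflexivity.
Qed.

Definition mrenth z (th : nat -> nat * ctx) a := (z (fst (th a)), mrenE z (snd (th a))).

Lemma mren_ms : (forall t th z, mren z (ms th t) = ms (mrenth z th) t)
  /\ (forall c th z, mren_c z (ms_c th c) = ms_c (mrenth z th) c).
Proof.
  apply tmcmd_ind; intros; simpl; try solve [f_equal; eauto].
  - rewrite H. f_equal. f_equal. extensionality a. unfold mrenth, thlam; simpl.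
    rewrite renE_mren. reflexivity.
  - rewrite H. f_equal. f_equal. extensionality a. unfold mrenth, thup; destruct a; simpl;
    [reflexivity| rewrite !mrenE_mren; reflexivity].
  - rewrite plug_mren, H. reflexivity.
Qed.

Lemma msE_mren th z E : msE th (mrenE z E) = msE (fun a => th (z a)) E.
Proof. induction E; simpl; rewrite ?(proj1 ms_mren); congruence. Qed.
Lemma mrenE_ms z th E : mrenE z (msE th E) = msE (mrenth z th) E.
Proof. induction E; simpl; rewrite ?(proj1 mren_ms); congruence. Qed.
Lemma renE_ms xi th E : renE xi (msE th E) = msE (renth xi th) (renE xi E).
Proof. induction E; simpl; rewrite ?(proj1 ren_ms); congruence. Qed.
Lemma msE_cc th F E : msE th (cc F E) = cc (msE th F) (msE th E).
Proof. induction F; simpl; congruence. Qed.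

Definition comp (th1 th2 : nat -> nat * ctx) a :=
  (fst (th2 (fst (th1 a))), cc (snd (th2 (fst (th1 a)))) (msE th2 (snd (th1 a)))).

Lemma ms_ms : (forall t th1 th2, ms th2 (ms th1 t) = ms (comp th1 th2) t)
  /\ (forall c th1 th2, ms_c th2 (ms_c th1 c) = ms_c (comp th1 th2) c).
Proof.
  apply tmcmd_ind; intros; simpl; try solve [f_equal; eauto].
  - rewrite H. f_equal. f_equal. extensionality a. unfold comp, thlam; simpl.
    rewrite renE_cc, renE_ms. reflexivity.
  - rewrite H. f_equal. f_equal. extensionality a. unfold comp, thup; destruct a; simpl.
    + reflexivity.
    + rewrite mrenE_cc, mrenE_ms, msE_mren. reflexivity.
  - rewrite plug_ms, H, plug_cc. reflexivity.
Qed.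

Lemma ms_ren_mren : (forall t z, ms (fun a => (z a, Hole)) t = mren z t)
  /\ (forall c z, ms_c (fun a => (z a, Hole)) c = mren_c z c).
Proof.
  apply tmcmd_ind; intros; simpl; try solve [f_equal; eauto].
  all: rewrite <- H; repeat f_equal; extensionality a; destruct a; reflexivity.
Qed.

Lemma ls_ren : (forall t s xi, ls s (ren xi t) = ls (fun n => s (xi n)) t)
  /\ (forall c s xi, ls_c s (ren_c xi c) = ls_c (fun n => s (xi n)) c).
Proof.
  apply tmcmd_ind; intros; simpl; try solve [f_equal; eauto].
  all: rewrite H; repeat f_equal; extensionality n; destruct n; reflexivity.
Qed.

Lemma ren_ls : (forall t s xi, ren xi (ls s t) = ls (fun n => ren xi (s n)) t)
  /\ (forall c s xi, ren_c xi (ls_c s c) = ls_c (fun n => ren xi (s n)) c).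
Proof.
  apply tmcmd_ind; intros; simpl; try solve [f_equal; eauto].
  all: rewrite H; repeat f_equal; extensionality n; try destruct n; simpl; try reflexivity.
  all: rewrite ?(proj1 ren_ren), ?(proj1 ren_mren); reflexivity.
Qed.

Lemma mren_ls : (forall t s z, mren z (ls s t) = ls (fun n => mren z (s n)) (mren z t))
  /\ (forall c s z, mren_c z (ls_c s c) = ls_c (fun n => mren z (s n)) (mren_c z c)).
Proof.
  apply tmcmd_ind; intros; simpl; try solve [f_equal; eauto].
  all: rewrite H; repeat f_equal; extensionality n; try destruct n; simpl; try reflexivity.
  all: rewrite ?(proj1 ren_mren), ?(proj1 mren_mren); reflexivity.
Qed.


Definition liftn k n := if k <=? n then S n else n.
Definition lown k n := if k <? n then pred n else n.
Definition sigs j r n := if n =? j then r else if j <? n then var (pred n) else var n.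
Definition ths j b E (a : nat) : nat * ctx := if a =? j then (b, E) else (a, Hole).
Definition th0 E (a : nat) : nat * ctx := match a with 0 => (0, E) | S n => (S n, Hole) end.
Definition rho a n := match n with 0 => a | S n => n end.

Lemma upr_liftn k : upr (liftn k) = liftn (S k).
Proof. extensionality n; destruct n; unfold liftn; simpl; auto. destruct (k <=? n); auto. Qed.
Lemma upr_lown k : upr (lown k) = lown (S k).
Proof. extensionality n; destruct n; unfold lown; simpl; auto.
  destruct n; simpl. destruct k; reflexivity.
  destruct (Nat.ltb_spec k (S n)); destruct (Nat.ltb_spec (S k) (S (S n))); simpl; auto; lia. Qed.
Lemma liftn0 : liftn 0 = S.
Proof. extensionality n; reflexivity. Qed.
Lemma lown0 : lown 0 = pred.
Proof. extensionality n; destruct n; reflexivity. Qed.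

Lemma lift_ren : (forall t k, lift k t = ren (liftn k) t) /\ (forall c k, lift_c k c = ren_c (liftn k) c).
Proof.
  apply tmcmd_ind; intros; simpl; try solve [f_equal; eauto].
  all: try (rewrite H, upr_liftn; reflexivity).
  all: unfold liftn; try destruct (_ <=? _); f_equal; eauto.
Qed.

Lemma mlift_mren : (forall t k, mlift k t = mren (liftn k) t) /\ (forall c k, mlift_c k c = mren_c (liftn k) c).
Proof.
  apply tmcmd_ind; intros; simpl; try solve [f_equal; eauto].
  all: try (rewrite H, upr_liftn; reflexivity).
  all: unfold liftn; try destruct (_ <=? _); f_equal; eauto.
Qed.

Lemma mlower_mren : (forall t k, mlower k t = mren (lown k) t) /\ (forall c k, mlower_c k c = mren_c (lown k) c).
Proof.
  apply tmcmd_ind; intros; simpl; try solve [f_equal; eauto].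
  all: try (rewrite H, upr_lown; reflexivity).
  all: unfold lown; f_equal; eauto.
Qed.

Lemma liftE_ren k E : liftE k E = renE (liftn k) E.
Proof. induction E; simpl; rewrite ?(proj1 lift_ren); congruence. Qed.
Lemma mliftE_mren k E : mliftE k E = mrenE (liftn k) E.
Proof. induction E; simpl; rewrite ?(proj1 mlift_mren); congruence. Qed.

Lemma subst_ls : (forall t j r, subst j r t = ls (sigs j r) t) /\ (forall c j r, subst_c j r c = ls_c (sigs j r) c).
Proof.
  apply tmcmd_ind; intros; simpl; try solve [f_equal; eauto].
  - rewrite H. f_equal. f_equal. extensionality n. rewrite (proj1 lift_ren), liftn0.
    unfold sigs, upl. destruct n; simpl. reflexivity.
    change (S j <? S n) with (j <? n).
    destruct (n =? j); auto. destruct (Nat.ltb_spec j n); simpl; auto. destruct n; simpl; auto; lia.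
  - rewrite H. f_equal. f_equal. extensionality n. rewrite (proj1 mlift_mren), liftn0.
    unfold sigs. destruct (n =? j); auto. destruct (j <? n); reflexivity.
Qed.

Lemma ssub_ms : (forall t j b E, ssub j b E t = ms (ths j b E) t) /\ (forall c j b E, ssub_c j b E c = ms_c (ths j b E) c).
Proof.
  apply tmcmd_ind; intros; simpl; try solve [f_equal; eauto].
  - rewrite H. f_equal. f_equal. extensionality a. rewrite liftE_ren, liftn0.
    unfold ths, thlam. destruct (a =? j); reflexivity.
  - rewrite H. f_equal. f_equal. extensionality a. rewrite mliftE_mren, liftn0.
    unfold ths, thup. destruct a; simpl. reflexivity. destruct (a =? j); reflexivity.
  - unfold ths. destruct (a =? j); simpl; rewrite H; reflexivity.
Qed.

Lemma mfree_mlift : (forall t k, mfree k (mlift k t) = false) /\ (forall c k, mfree_c k (mlift_c k c) = false).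
Proof.
  apply tmcmd_ind; intros; simpl; rewrite ?H, ?H0, ?H1; auto.
  destruct (Nat.leb_spec k a); apply Bool.orb_false_iff; split; auto;
   apply Nat.eqb_neq; lia.
Qed.

Lemma mlower_mlift : (forall t k, mlower k (mlift k t) = t) /\ (forall c k, mlower_c k (mlift_c k c) = c).
Proof.
  apply tmcmd_ind; intros; simpl; rewrite ?H, ?H0, ?H1; auto.
  f_equal. destruct (Nat.leb_spec k a); [destruct (Nat.ltb_spec k (S a)) | destruct (Nat.ltb_spec k a)]; simpl; lia.
Qed.

Lemma mlift_mlower : (forall t k, mfree k t = false -> mlift k (mlower k t) = t)
  /\ (forall c k, mfree_c k c = false -> mlift_c k (mlower_c k c) = c).
Proof.
  apply tmcmd_ind; intros; simpl in *;
    repeat match goal with H : orb _ _ = false |- _ => apply Bool.orb_false_iff in H; destruct H end;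
    try solve [f_equal; eauto].
  apply Nat.eqb_neq in H0. f_equal; auto.
  destruct (Nat.ltb_spec k a); [destruct (Nat.leb_spec k (pred a)) | destruct (Nat.leb_spec k a)]; simpl; lia.
Qed.

Inductive rootA' : tm -> tm -> Prop :=
| rA'_beta t r : rootA' (app (lam t) r) (ls (sigs 0 r) t)
| rA'_succ c : rootA' (succ (mu c)) (mu (ms_c (th0 (CSucc Hole)) c))
| rA'_app c s : rootA' (app (mu c) s) (mu (ms_c (th0 (CApp Hole (mren S s))) c))
| rA'_nrec0 r s : rootA' (nrec r s zero) r
| rA'_nrecS r s n :
    rootA' (nrec r s (succ (numeral n)))
          (app (app s (numeral n)) (nrec r s (numeral n)))
| rA'_nrecmu r s c :
    rootA' (nrec r s (mu c))
          (mu (ms_c (th0 (CNrec (mren S r) (mren S s) Hole)) c)).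

Inductive rootB' : tm -> tm -> Prop :=
| rB'_eta t : rootB' (mu (named 0 (mren S t))) t.
Inductive rootBc' : cmd -> cmd -> Prop :=
| rB'_named a c : rootBc' (named a (mu c)) (mren_c (rho a) c).

Lemma th0_ths E : ths 0 0 E = th0 E.
Proof. extensionality a; destruct a; reflexivity. Qed.

Lemma rootA_eq t u : rootA t u <-> rootA' t u.
Proof.
  split; intro H; destruct H;
   rewrite ?(proj1 subst_ls), ?(proj2 ssub_ms), ?th0_ths, ?(proj1 mlift_mren), ?liftn0;
   try constructor.
  - rewrite <- (proj1 subst_ls). constructor.
  - rewrite <- th0_ths, <- (proj2 ssub_ms). constructor.
  - rewrite <- liftn0, <- (proj1 mlift_mren), <- th0_ths, <- (proj2 ssub_ms). constructor.
  - rewrite <- liftn0, <- !(proj1 mlift_mren), <- th0_ths, <- (proj2 ssub_ms). constructor.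
Qed.

Lemma rootB_eq t u : rootB t u <-> rootB' t u.
Proof.
  split; intro H; destruct H.
  - rewrite <- (proj1 mlift_mlower t 0 H) at 1.
    rewrite (proj1 mlift_mren), liftn0. constructor.
  - rewrite <- liftn0, <- (proj1 mlift_mren).
    rewrite <- (proj1 mlower_mlift t 0) at 2. constructor. apply mfree_mlift.
Qed.

Lemma rho_eq a c : mlower_c 0 (ssub_c 0 (S a) Hole c) = mren_c (rho a) c.
Proof.
  rewrite (proj2 mlower_mren), (proj2 ssub_ms), lown0.
  replace (ths 0 (S a) Hole) with (fun x => ((fun n => match n with 0 => S a | S m => S m end) x, Hole))
    by (extensionality x; destruct x; reflexivity).
  rewrite (proj2 ms_ren_mren), (proj2 mren_mren). f_equal. extensionality x; destruct x; reflexivity.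
Qed.

Lemma rootBc_eq c d : rootB_c c d <-> rootBc' c d.
Proof.
  split; intro H; destruct H; [rewrite rho_eq | rewrite <- rho_eq]; constructor.
Qed.

Scheme compat_ind2 := Induction for compat Sort Prop
 with compat_c_ind2 := Induction for compat_c Sort Prop.
Combined Scheme compat_mind from compat_ind2, compat_c_ind2.

Lemma compat_mono (R R' : tm -> tm -> Prop) (Rc Rc' : cmd -> cmd -> Prop) :
  (forall t u, R t u -> R' t u) -> (forall c d, Rc c d -> Rc' c d) ->
  (forall t u, compat R Rc t u -> compat R' Rc' t u) /\
  (forall c d, compat_c R Rc c d -> compat_c R' Rc' c d).
Proof.
  intros HR HRc. apply compat_mind; intros; eauto using compat, compat_c.
Qed.

Inductive noc : cmd -> cmd -> Prop := .
Definition stepA' := compat rootA' noc.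
Definition stepAc' := compat_c rootA' noc.
Definition stepB' := compat rootB' rootBc'.
Definition stepBc' := compat_c rootB' rootBc'.
Definition stepAB' t u := stepA' t u \/ stepB' t u.
Definition stepABc' c d := stepAc' c d \/ stepBc' c d.
Definition redAB' := clos_refl_trans tm stepAB'.
Definition redABc' := clos_refl_trans cmd stepABc'.
Definition redB' := clos_refl_trans tm stepB'.
Definition redBc' := clos_refl_trans cmd stepBc'.

Lemma stepA_eq t u : stepA t u <-> stepA' t u.
Proof.
  split; intro H.
  - refine (proj1 (compat_mono rootA rootA' rootA_c noc _ _) t u H).
    intros; apply rootA_eq; auto. intros c d Hc; destruct Hc.
  - refine (proj1 (compat_mono rootA' rootA noc rootA_c _ _) t u H).
    intros; apply rootA_eq; auto. intros c d Hc; destruct Hc.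
Qed.

Lemma stepB_eq t u : stepB t u <-> stepB' t u.
Proof.
  split; intro H.
  - refine (proj1 (compat_mono rootB rootB' rootB_c rootBc' _ _) t u H).
    intros; apply rootB_eq; auto. intros; apply rootBc_eq; auto.
  - refine (proj1 (compat_mono rootB' rootB rootBc' rootB_c _ _) t u H).
    intros; apply rootB_eq; auto. intros; apply rootBc_eq; auto.
Qed.


Lemma rt_map {A B} (R : A -> A -> Prop) (R' : B -> B -> Prop) (f : A -> B) :
  (forall x y, R x y -> R' (f x) (f y)) ->
  forall x y, clos_refl_trans A R x y -> clos_refl_trans B R' (f x) (f y).
Proof.
  intros Hf x y H; induction H; [apply rt_step; auto | apply rt_refl | eapply rt_trans; eauto].
Qed.

Ltac cong := intros; unfold redAB', redABc', redB', redBc', stepAB', stepABc', stepA', stepB', stepAc', stepBc' in *; match goal with H : clos_refl_trans _ _ _ _ |- _ =>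
  refine (rt_map _ _ _ _ _ _ H); intros ? ? [?|?]; [left|right]; constructor; assumption end.
Ltac congB := intros; unfold redAB', redABc', redB', redBc', stepAB', stepABc', stepA', stepB', stepAc', stepBc' in *; match goal with H : clos_refl_trans _ _ _ _ |- _ =>
  refine (rt_map _ _ _ _ _ _ H); intros; constructor; assumption end.

Lemma redAB_lam t u : redAB' t u -> redAB' (lam t) (lam u). Proof. cong. Qed.
Lemma redAB_appl t u s : redAB' t u -> redAB' (app t s) (app u s). Proof. cong. Qed.
Lemma redAB_appr t u s : redAB' t u -> redAB' (app s t) (app s u). Proof. cong. Qed.
Lemma redAB_mu c d : redABc' c d -> redAB' (mu c) (mu d). Proof. cong. Qed.
Lemma redAB_succ t u : redAB' t u -> redAB' (succ t) (succ u). Proof. cong. Qed.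
Lemma redAB_nrec1 t u s v : redAB' t u -> redAB' (nrec t s v) (nrec u s v). Proof. cong. Qed.
Lemma redAB_nrec2 t u s v : redAB' t u -> redAB' (nrec s t v) (nrec s u v). Proof. cong. Qed.
Lemma redAB_nrec3 t u s v : redAB' t u -> redAB' (nrec s v t) (nrec s v u). Proof. cong. Qed.
Lemma redABc_named a t u : redAB' t u -> redABc' (named a t) (named a u). Proof. cong. Qed.

Lemma redB_lam t u : redB' t u -> redB' (lam t) (lam u). Proof. congB. Qed.
Lemma redB_appl t u s : redB' t u -> redB' (app t s) (app u s). Proof. congB. Qed.
Lemma redB_appr t u s : redB' t u -> redB' (app s t) (app s u). Proof. congB. Qed.
Lemma redB_mu c d : redBc' c d -> redB' (mu c) (mu d). Proof. congB. Qed.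
Lemma redB_succ t u : redB' t u -> redB' (succ t) (succ u). Proof. congB. Qed.
Lemma redB_nrec1 t u s v : redB' t u -> redB' (nrec t s v) (nrec u s v). Proof. congB. Qed.
Lemma redB_nrec2 t u s v : redB' t u -> redB' (nrec s t v) (nrec s u v). Proof. congB. Qed.
Lemma redB_nrec3 t u s v : redB' t u -> redB' (nrec s v t) (nrec s v u). Proof. congB. Qed.
Lemma redBc_named a t u : redB' t u -> redBc' (named a t) (named a u). Proof. congB. Qed.

Lemma redAB_plug E u v : redAB' u v -> redAB' (plug E u) (plug E v).
Proof. induction E; simpl; intros; auto using redAB_appl, redAB_succ, redAB_nrec3. Qed.

Lemma A_AB t u : stepA' t u -> redAB' t u. Proof. intros; apply rt_step; left; auto. Qed.
Lemma B_AB t u : stepB' t u -> redAB' t u. Proof. intros; apply rt_step; right; auto. Qed.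
Lemma Ac_ABc t u : stepAc' t u -> redABc' t u. Proof. intros; apply rt_step; left; auto. Qed.
Lemma Bc_ABc t u : stepBc' t u -> redABc' t u. Proof. intros; apply rt_step; right; auto. Qed.
Lemma redB_AB t u : redB' t u -> redAB' t u.
Proof. intro H; induction H; [apply B_AB|apply rt_refl|eapply rt_trans]; eauto. Qed.
Lemma redBc_ABc t u : redBc' t u -> redABc' t u.
Proof. intro H; induction H; [apply Bc_ABc|apply rt_refl|eapply rt_trans]; eauto. Qed.

Lemma rtt {A} (R : A -> A -> Prop) x y z : clos_refl_trans A R x y -> clos_refl_trans A R y z -> clos_refl_trans A R x z.
Proof. apply rt_trans. Qed.

Lemma ren_stepB : (forall t u, compat rootB' rootBc' t u -> forall xi, stepB' (ren xi t) (ren xi u))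
  /\ (forall c d, compat_c rootB' rootBc' c d -> forall xi, stepBc' (ren_c xi c) (ren_c xi d)).
Proof.
  apply compat_mind; unfold stepB', stepBc', stepA', stepAc' in *; intros; simpl; try (constructor; auto; fail).
  - destruct r; simpl. rewrite (proj1 ren_mren). do 2 constructor.
  - destruct r; simpl. rewrite (proj2 ren_mren). do 2 constructor.
Qed.

Lemma mren_stepB : (forall t u, compat rootB' rootBc' t u -> forall z, stepB' (mren z t) (mren z u))
  /\ (forall c d, compat_c rootB' rootBc' c d -> forall z, stepBc' (mren_c z c) (mren_c z d)).
Proof.
  apply compat_mind; unfold stepB', stepBc', stepA', stepAc' in *; intros; simpl; try (constructor; auto; fail).
  - destruct r; simpl. rewrite (proj1 mren_mren).
    replace (fun n => upr z (S n)) with (fun n => S (z n)) by reflexivity.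
    rewrite <- (proj1 mren_mren t S z). do 2 constructor.
  - destruct r; simpl. rewrite (proj2 mren_mren c z (rho a)).
    replace (fun n => z (rho a n)) with (fun n => rho (z a) (upr z n))
      by (extensionality n; destruct n; reflexivity).
    rewrite <- (proj2 mren_mren c (rho (z a)) (upr z)). do 2 constructor.
Qed.

Lemma ls_stepB : (forall t u, compat rootB' rootBc' t u -> forall s, stepB' (ls s t) (ls s u))
  /\ (forall c d, compat_c rootB' rootBc' c d -> forall s, stepBc' (ls_c s c) (ls_c s d)).
Proof.
  apply compat_mind; unfold stepB', stepBc', stepA', stepAc' in *; intros; simpl; try (constructor; auto; fail).
  - destruct r; simpl. rewrite <- (proj1 mren_ls). do 2 constructor.
  - destruct r; simpl.
    replace (ls_c s (mren_c (rho a) c)) with (mren_c (rho a) (ls_c (fun n => mren S (s n)) c)).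
    do 2 constructor.
    rewrite (proj2 mren_ls). f_equal.
    extensionality n. rewrite (proj1 mren_mren). simpl. rewrite (proj1 mren_id). reflexivity.
Qed.

Lemma mren_numeral z n : mren z (numeral n) = numeral n.
Proof. induction n; simpl; congruence. Qed.

Lemma mren_th0 z F F' c : mrenE (upr z) F = F' ->
  mren_c (upr z) (ms_c (th0 F) c) = ms_c (th0 F') (mren_c (upr z) c).
Proof.
  intros HF. rewrite (proj2 mren_ms), (proj2 ms_mren). f_equal. extensionality a.
  destruct a; unfold mrenth; simpl; congruence.
Qed.

Lemma mren_sigs z r : (fun n => mren z (sigs 0 r n)) = sigs 0 (mren z r).
Proof. extensionality n; destruct n; reflexivity. Qed.

Lemma mren_stepA : (forall t u, compat rootA' noc t u -> forall z, stepA' (mren z t) (mren z u))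
  /\ (forall c d, compat_c rootA' noc c d -> forall z, stepAc' (mren_c z c) (mren_c z d)).
Proof.
  apply compat_mind; unfold stepB', stepBc', stepA', stepAc' in *; intros; simpl; try (constructor; auto; fail).
  - destruct r; simpl.
    + rewrite (proj1 mren_ls), mren_sigs. do 2 constructor.
    + erewrite mren_th0 by reflexivity. do 2 constructor.
    + erewrite mren_th0. do 2 constructor. simpl. rewrite !(proj1 mren_mren). reflexivity.
    + do 2 constructor.
    + rewrite !mren_numeral. do 2 constructor.
    + erewrite mren_th0. do 2 constructor. simpl. rewrite !(proj1 mren_mren). reflexivity.
  - match goal with H : noc _ _ |- _ => destruct H end.
Qed.


Lemma mren_inv_lam z t u : lam u = mren z t -> exists t', t = lam t' /\ u = mren z t'.
Proof. destruct t; simpl; intro H; inversion H; eauto. Qed.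
Lemma mren_inv_mu z t c : mu c = mren z t -> exists c', t = mu c' /\ c = mren_c (upr z) c'.
Proof. destruct t; simpl; intro H; inversion H; eauto. Qed.
Lemma mren_inv_zero z t : zero = mren z t -> t = zero.
Proof. destruct t; simpl; intro H; inversion H; eauto. Qed.
Lemma mren_inv_num z n : forall t, numeral n = mren z t -> t = numeral n.
Proof. induction n; intros t; destruct t; simpl; intro H; inversion H; subst; f_equal; eauto. Qed.

Ltac refl_cong :=
  match goal with
  | IH : forall z u, compat _ _ (mren z ?x) u -> _, Hs : compat _ _ (mren ?z ?x) ?u |- _ =>
      destruct (IH z u Hs) as [?x' [? ?]]; subst
  | IH : forall z u, compat_c _ _ (mren_c z ?x) u -> _, Hs : compat_c _ _ (mren_c ?z ?x) ?u |- _ =>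
      destruct (IH z u Hs) as [?x' [? ?]]; subst
  end; eexists; split; [constructor; eassumption | simpl; reflexivity].

Lemma mren_reflA : (forall t z u, stepA' (mren z t) u -> exists t', stepA' t t' /\ mren z t' = u)
  /\ (forall c z d, stepAc' (mren_c z c) d -> exists c', stepAc' c c' /\ mren_c z c' = d).
Proof.
  unfold stepA', stepAc'.
  apply tmcmd_ind; intros; simpl in *.
  all: match goal with Hs : compat _ _ _ _ |- _ => inversion Hs; subst | Hs : compat_c _ _ _ _ |- _ => inversion Hs; subst end.
  all: try match goal with H : rootA' _ _ |- _ => inversion H; subst end.
  all: try match goal with H : noc _ _ |- _ => inversion H end.
  all: try refl_cong.
  -
    match goal with Hq : lam _ = mren _ _ |- _ => destruct (mren_inv_lam _ _ _ Hq) as [t1 [? ?]]; subst end.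
    eexists; split; [constructor; constructor|].
    rewrite (proj1 mren_ls), mren_sigs. reflexivity.
  - match goal with Hq : mu _ = mren _ _ |- _ => destruct (mren_inv_mu _ _ _ Hq) as [c1 [? ?]]; subst end.
    eexists; split; [constructor; constructor|].
    simpl. erewrite mren_th0; [reflexivity|]. simpl. rewrite !(proj1 mren_mren). reflexivity.
  - match goal with Hq : mu _ = mren _ _ |- _ => destruct (mren_inv_mu _ _ _ Hq) as [c1 [? ?]]; subst end.
    eexists; split; [constructor; constructor|].
    simpl. erewrite mren_th0; reflexivity.
  - match goal with Hq : zero = mren _ _ |- _ => rewrite (mren_inv_zero _ _ Hq) end.
    eexists; split; [constructor; constructor|reflexivity].
  - match goal with Hq : succ (numeral ?n) = mren _ _ |- _ => rewrite (mren_inv_num _ (S n) _ Hq) end.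
    eexists; split; [constructor; constructor|]. simpl. rewrite !mren_numeral. reflexivity.
  - match goal with Hq : mu _ = mren _ _ |- _ => destruct (mren_inv_mu _ _ _ Hq) as [c1 [? ?]]; subst end.
    eexists; split; [constructor; constructor|].
    simpl. erewrite mren_th0; [reflexivity|]. simpl. rewrite !(proj1 mren_mren). reflexivity.
Qed.


Lemma ren_redB xi t u : redB' t u -> redB' (ren xi t) (ren xi u).
Proof. intro H. refine (rt_map _ _ _ _ _ _ H). intros; apply ren_stepB; auto. Qed.
Lemma mren_redB z t u : redB' t u -> redB' (mren z t) (mren z u).
Proof. intro H. refine (rt_map _ _ _ _ _ _ H). intros; apply mren_stepB; auto. Qed.

Ltac rtrans := eapply rt_trans.

Lemma ls_redB : (forall t s s', (forall n, redB' (s n) (s' n)) -> redB' (ls s t) (ls s' t))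
  /\ (forall c s s', (forall n, redB' (s n) (s' n)) -> redBc' (ls_c s c) (ls_c s' c)).
Proof.
  apply tmcmd_ind; intros; simpl; auto; try apply rt_refl.
  - apply redB_lam. apply H. intros [|n]; simpl; [apply rt_refl| apply ren_redB; auto].
  - rtrans; [apply redB_appl; eauto | apply redB_appr; eauto].
  - apply redB_mu. apply H. intros; apply mren_redB; auto.
  - apply redB_succ; eauto.
  - rtrans; [apply redB_nrec1; eauto|]. rtrans; [apply redB_nrec2; eauto| apply redB_nrec3; eauto].
  - apply redBc_named; eauto.
Qed.

Inductive ctxR : ctx -> ctx -> Prop :=
| cR_hole : ctxR Hole Hole
| cR_app E E' t t' : ctxR E E' -> redB' t t' -> ctxR (CApp E t) (CApp E' t')
| cR_succ E E' : ctxR E E' -> ctxR (CSucc E) (CSucc E')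
| cR_nrec r r' s s' E E' : redB' r r' -> redB' s s' -> ctxR E E' -> ctxR (CNrec r s E) (CNrec r' s' E').

Lemma ctxR_refl E : ctxR E E.
Proof. induction E; constructor; auto; apply rt_refl. Qed.
Lemma ctxR_plug E E' u u' : ctxR E E' -> redB' u u' -> redB' (plug E u) (plug E' u').
Proof.
  intros H; revert u u'; induction H; simpl; intros; auto.
  - rtrans; [apply redB_appl; eauto | apply redB_appr; eauto].
  - apply redB_succ; eauto.
  - rtrans; [apply redB_nrec1; eauto|]. rtrans; [apply redB_nrec2; eauto| apply redB_nrec3; eauto].
Qed.
Lemma ctxR_ren xi E E' : ctxR E E' -> ctxR (renE xi E) (renE xi E').
Proof. induction 1; simpl; constructor; auto using ren_redB. Qed.
Lemma ctxR_mren z E E' : ctxR E E' -> ctxR (mrenE z E) (mrenE z E').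
Proof. induction 1; simpl; constructor; auto using mren_redB. Qed.

Lemma ms_ctxR : (forall t th th', (forall a, fst (th a) = fst (th' a) /\ ctxR (snd (th a)) (snd (th' a))) ->
     redB' (ms th t) (ms th' t))
  /\ (forall c th th', (forall a, fst (th a) = fst (th' a) /\ ctxR (snd (th a)) (snd (th' a))) ->
     redBc' (ms_c th c) (ms_c th' c)).
Proof.
  apply tmcmd_ind; intros; simpl; auto; try apply rt_refl.
  - apply redB_lam. apply H. intros a; unfold thlam; simpl. destruct (H0 a); split; auto.
    apply ctxR_ren; auto.
  - rtrans; [apply redB_appl; eauto | apply redB_appr; eauto].
  - apply redB_mu. apply H. intros [|a]; simpl. split; auto; constructor.
    destruct (H0 a); split; auto. apply ctxR_mren; auto.
  - apply redB_succ; eauto.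
  - rtrans; [apply redB_nrec1; eauto|]. rtrans; [apply redB_nrec2; eauto| apply redB_nrec3; eauto].
  - destruct (H0 a) as [E1 E2]. rewrite E1. apply redBc_named. apply ctxR_plug; auto.
Qed.

Lemma msE_ren_mren z E : msE (fun a => (z a, Hole)) E = mrenE z E.
Proof. induction E; simpl; rewrite ?(proj1 ms_ren_mren); congruence. Qed.

Lemma th0_Hole c : ms_c (th0 Hole) c = c.
Proof.
  replace (th0 Hole) with (fun a : nat => ((fun n : nat => n) a, Hole)) by (extensionality a; destruct a; reflexivity).
  rewrite (proj2 ms_ren_mren). apply mren_id.
Qed.

Lemma comp_th0 E F : comp (th0 (mrenE S E)) (th0 F) = th0 (cc F (mrenE S E)).
Proof.
  extensionality a; destruct a; unfold comp; simpl.
  - rewrite msE_mren. simpl. f_equal. f_equal.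
    replace (fun a => (S a, Hole)) with (fun a => (S a, Hole)) by reflexivity.
    apply (msE_ren_mren S).
  - reflexivity.
Qed.

Lemma push E c : redAB' (plug E (mu c)) (mu (ms_c (th0 (mrenE S E)) c)).
Proof.
  induction E; simpl.
  - rewrite th0_Hole. apply rt_refl.
  - rtrans; [apply redAB_appl; eauto|]. apply A_AB.
    change (CApp (mrenE S E) (mren S t)) with (cc (CApp Hole (mren S t)) (mrenE S E)).
    rewrite <- comp_th0, <- (proj2 ms_ms). do 2 constructor.
  - rtrans; [apply redAB_succ; eauto|]. apply A_AB.
    change (CSucc (mrenE S E)) with (cc (CSucc Hole) (mrenE S E)).
    rewrite <- comp_th0, <- (proj2 ms_ms). do 2 constructor.
  - rtrans; [apply redAB_nrec3; eauto|]. apply A_AB.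
    change (CNrec (mren S r) (mren S s) (mrenE S E)) with (cc (CNrec (mren S r) (mren S s) Hole) (mrenE S E)).
    rewrite <- comp_th0, <- (proj2 ms_ms). do 2 constructor.
Qed.


Lemma ms_stepB : (forall t u, compat rootB' rootBc' t u -> forall th, redAB' (ms th t) (ms th u))
  /\ (forall c d, compat_c rootB' rootBc' c d -> forall th, redABc' (ms_c th c) (ms_c th d)).
Proof.
  apply compat_mind; intros; simpl;
   eauto using redAB_lam, redAB_appl, redAB_appr, redAB_mu, redAB_succ, redAB_nrec1, redAB_nrec2, redAB_nrec3,
     redABc_named, redAB_plug.
  - destruct r; simpl. rewrite (proj1 ms_mren).
    replace (ms (fun a => thup th (S a)) t) with (mren S (ms th t)).
    apply B_AB. do 2 constructor.
    rewrite (proj1 mren_ms). reflexivity.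
  - destruct r; simpl.
    destruct (th a) as [b E] eqn:Ha; simpl.
    rtrans; [apply redABc_named; apply push|].
    apply Bc_ABc. 
    replace (ms_c th (mren_c (rho a) c)) with (mren_c (rho b) (ms_c (th0 (mrenE S E)) (ms_c (thup th) c))).
    constructor. constructor.
    rewrite (proj2 ms_ms), (proj2 mren_ms), (proj2 ms_mren). f_equal.
    extensionality x; destruct x; unfold comp, mrenth; simpl.
    + rewrite cc_Hole, Ha, mrenE_mren. simpl. rewrite mrenE_id. reflexivity.
    + destruct (th x) as [b' E2]; simpl. rewrite msE_mren. simpl.
      rewrite (msE_ren_mren S), mrenE_mren. simpl. rewrite mrenE_id. reflexivity.
Qed.


Lemma push' E c : E <> Hole ->
  exists t4, stepA' (plug E (mu c)) t4 /\ redAB' t4 (mu (ms_c (th0 (mrenE S E)) c)).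
Proof.
  unfold stepA'.
  induction E; intros HE; [congruence| | |];
  (assert (HE': E = Hole \/ E <> Hole) by (destruct E; [left|right..]; congruence));
  destruct HE' as [->|HE'].
  - simpl. eexists; split; [do 2 constructor | apply rt_refl].
  - destruct (IHE HE') as [t4 [H1 H2]]. exists (app t4 t); split; [apply c_appl; auto|].
    simpl. rtrans; [apply redAB_appl; eauto|]. apply A_AB.
    change (CApp (mrenE S E) (mren S t)) with (cc (CApp Hole (mren S t)) (mrenE S E)).
    rewrite <- comp_th0, <- (proj2 ms_ms). do 2 constructor.
  - simpl. eexists; split; [do 2 constructor | apply rt_refl].
  - destruct (IHE HE') as [t4 [H1 H2]]. exists (succ t4); split; [apply c_succ; auto|].
    simpl. rtrans; [apply redAB_succ; eauto|]. apply A_AB.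
    change (CSucc (mrenE S E)) with (cc (CSucc Hole) (mrenE S E)).
    rewrite <- comp_th0, <- (proj2 ms_ms). do 2 constructor.
  - simpl. eexists; split; [do 2 constructor | apply rt_refl].
  - destruct (IHE HE') as [t4 [H1 H2]]. exists (nrec r s t4); split; [apply c_nrec3; auto|].
    simpl. rtrans; [apply redAB_nrec3; eauto|]. apply A_AB.
    change (CNrec (mren S r) (mren S s) (mrenE S E)) with (cc (CNrec (mren S r) (mren S s) Hole) (mrenE S E)).
    rewrite <- comp_th0, <- (proj2 ms_ms). do 2 constructor.
Qed.

Lemma ms_th0_mrenS F x : ms (th0 F) (mren S x) = mren S x.
Proof.
  rewrite (proj1 ms_mren). apply (proj1 ms_ren_mren x S).
Qed.

Lemma G E x t1 t2 t3 : E <> Hole -> t1 = plug E (mu (named 0 (mren S x))) -> t2 = plug E x ->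
  stepA' t2 t3 -> exists t4, stepA' t1 t4 /\ redAB' t4 t3.
Proof.
  intros HE -> -> H. destruct (push' E (named 0 (mren S x)) HE) as [t4 [H1 H2]].
  exists t4; split; auto. rtrans; [apply H2|]. simpl. rewrite ms_th0_mrenS, <- plug_mren.
  rtrans; [apply A_AB; constructor; constructor; apply mren_stepA; exact H|].
  apply B_AB. do 2 constructor.
Qed.

Lemma numB n : forall u, compat rootB' rootBc' u (numeral n) ->
  exists E x, u = plug E (mu (named 0 (mren S x))) /\ numeral n = plug E x.
Proof.
  induction n; intros u H; simpl in H; inversion H; subst.
  - inversion H0; subst. exists Hole, zero; auto.
  - inversion H0; subst. exists Hole, (succ (numeral n)); auto.
  - match goal with Hh : compat _ _ _ (numeral n) |- _ => destruct (IHn _ Hh) as [E [x [-> Hx]]] end. exists (CSucc E), x; simpl; split; congruence.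
Qed.


Ltac invA HA := unfold stepA', stepAc' in HA; inversion HA; subst;
  try match goal with Hr : rootA' _ _ |- _ => inversion Hr; subst end;
  try match goal with Hr : noc _ _ |- _ => inversion Hr end.

Lemma sigs_redB s s' : redB' s s' -> forall n, redB' (sigs 0 s n) (sigs 0 s' n).
Proof. intros H [|n]; simpl; auto; apply rt_refl. Qed.

Lemma main : (forall t1 t2, compat rootB' rootBc' t1 t2 -> forall t3, stepA' t2 t3 ->
     exists t4, stepA' t1 t4 /\ redAB' t4 t3)
  /\ (forall c1 c2, compat_c rootB' rootBc' c1 c2 -> forall c3, stepAc' c2 c3 ->
     exists c4, stepAc' c1 c4 /\ redABc' c4 c3).
Proof.
  apply compat_mind.
  -
    intros t t' Hr t3 HA. destruct Hr.
    exists (mu (named 0 (mren S t3))). split.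
    + apply c_mu, cc_named. apply (proj1 mren_stepA). exact HA.
    + apply B_AB. do 2 constructor.
  -
    intros t t' Hb IH t3 HA. invA HA.
    match goal with Hs : compat _ _ t' _ |- _ => destruct (IH _ Hs) as [t4 [Ht4 Rt4]] end.
    exists (lam t4); split; [apply c_lam; auto| apply redAB_lam; auto].
  -
    intros x x' s Hb IH t3 HA. invA HA.
    + inversion Hb; subst.
      * eapply (G (CApp Hole s)); [discriminate | | reflexivity | exact HA].
        match goal with Hr : rootB' _ _ |- _ => inversion Hr; subst end. reflexivity.
      * eexists; split; [do 2 constructor|]. apply B_AB. apply ls_stepB. assumption.
    + inversion Hb; subst.
      * eapply (G (CApp Hole s)); [discriminate | | reflexivity | exact HA].
        match goal with Hr : rootB' _ _ |- _ => inversion Hr; subst end. reflexivity.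
      * eexists; split; [do 2 constructor|]. apply redAB_mu. apply ms_stepB. assumption.
    + match goal with Hs : compat _ _ x' _ |- _ => destruct (IH _ Hs) as [t4 [Ht4 Rt4]] end.
      exists (app t4 s); split; [apply c_appl; auto| apply redAB_appl; auto].
    + eexists; split; [apply c_appr; eassumption|]. apply B_AB. apply c_appl. assumption.
  -
    intros t s s' Hb IH t3 HA. invA HA.
    + eexists; split; [do 2 constructor|]. apply redB_AB. apply ls_redB.
      apply sigs_redB. apply rt_step. assumption.
    + eexists; split; [do 2 constructor|]. apply redB_AB. apply redB_mu. apply ms_ctxR.
      intros [|a]; simpl; split; auto; try apply ctxR_refl.
      constructor; [constructor|]. apply mren_redB. apply rt_step. assumption.
    + eexists; split; [apply c_appl; eassumption|]. apply B_AB. apply c_appr. assumption.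
    + match goal with Hs : compat _ _ s' _ |- _ => destruct (IH _ Hs) as [t4 [Ht4 Rt4]] end.
      exists (app t t4); split; [apply c_appr; auto| apply redAB_appr; auto].
  -
    intros c c' Hb IH t3 HA. invA HA.
    match goal with Hs : compat_c _ _ c' _ |- _ => destruct (IH _ Hs) as [t4 [Ht4 Rt4]] end.
    exists (mu t4); split; [apply c_mu; auto| apply redAB_mu; auto].
  -
    intros x x' Hb IH t3 HA. invA HA.
    + inversion Hb; subst.
      * eapply (G (CSucc Hole)); [discriminate | | reflexivity | exact HA].
        match goal with Hr : rootB' _ _ |- _ => inversion Hr; subst end. reflexivity.
      * eexists; split; [do 2 constructor|]. apply redAB_mu. apply ms_stepB. assumption.
    + match goal with Hs : compat _ _ x' _ |- _ => destruct (IH _ Hs) as [t4 [Ht4 Rt4]] end.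
      exists (succ t4); split; [apply c_succ; auto| apply redAB_succ; auto].
  -
    intros r r' s t Hb IH t3 HA. invA HA.
    + eexists; split; [do 2 constructor|]. apply B_AB; assumption.
    + eexists; split; [do 2 constructor|]. apply B_AB. apply c_appr. apply c_nrec1. assumption.
    + eexists; split; [do 2 constructor|]. apply redB_AB. apply redB_mu. apply ms_ctxR.
      intros [|a]; simpl; split; auto; try apply ctxR_refl.
      constructor; [apply mren_redB; apply rt_step; assumption | apply rt_refl | constructor].
    + match goal with Hs : compat _ _ r' _ |- _ => destruct (IH _ Hs) as [t4 [Ht4 Rt4]] end.
      exists (nrec t4 s t); split; [apply c_nrec1; auto| apply redAB_nrec1; auto].
    + eexists; split; [apply c_nrec2; eassumption|]. apply B_AB. apply c_nrec1. assumption.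
    + eexists; split; [apply c_nrec3; eassumption|]. apply B_AB. apply c_nrec1. assumption.
  -
    intros r s s' t Hb IH t3 HA. invA HA.
    + eexists; split; [do 2 constructor|]. apply rt_refl.
    + eexists; split; [do 2 constructor|]. rtrans; apply B_AB.
      apply c_appl, c_appl; eassumption. apply c_appr, c_nrec2; eassumption.
    + eexists; split; [do 2 constructor|]. apply redB_AB. apply redB_mu. apply ms_ctxR.
      intros [|a]; simpl; split; auto; try apply ctxR_refl.
      constructor; [apply rt_refl | apply mren_redB; apply rt_step; assumption | constructor].
    + eexists; split; [apply c_nrec1; eassumption|]. apply B_AB. apply c_nrec2. assumption.
    + match goal with Hs : compat _ _ s' _ |- _ => destruct (IH _ Hs) as [t4 [Ht4 Rt4]] end.
      exists (nrec r t4 t); split; [apply c_nrec2; auto| apply redAB_nrec2; auto].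
    + eexists; split; [apply c_nrec3; eassumption|]. apply B_AB. apply c_nrec2. assumption.
  -
    intros r s t t' Hb IH t3 HA. invA HA.
    + inversion Hb; subst.
      match goal with |- exists _, stepA' (nrec ?r ?s _) _ /\ _ => eapply (G (CNrec r s Hole)) end; [discriminate | | reflexivity | exact HA].
      match goal with Hr : rootB' _ _ |- _ => inversion Hr; subst end. reflexivity.
    + inversion Hb; subst.
      * match goal with |- exists _, stepA' (nrec ?r ?s _) _ /\ _ => eapply (G (CNrec r s Hole)) end; [discriminate | | reflexivity | exact HA].
        match goal with Hr : rootB' _ _ |- _ => inversion Hr; subst end. reflexivity.
      * match goal with Hh : compat _ _ _ (numeral _) |- _ =>
          destruct (numB _ _ Hh) as [E [x [-> Hx]]] end.
        match goal with |- exists _, stepA' (nrec ?r ?s _) _ /\ _ => eapply (G (CNrec r s (CSucc E))) end; [discriminate | reflexivity | simpl; rewrite <- Hx; reflexivity | exact HA].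
    + inversion Hb; subst.
      * match goal with |- exists _, stepA' (nrec ?r ?s _) _ /\ _ => eapply (G (CNrec r s Hole)) end; [discriminate | | reflexivity | exact HA].
        match goal with Hr : rootB' _ _ |- _ => inversion Hr; subst end. reflexivity.
      * eexists; split; [do 2 constructor|]. apply redAB_mu. apply ms_stepB. assumption.
    + eexists; split; [apply c_nrec1; eassumption|]. apply B_AB. apply c_nrec3. assumption.
    + eexists; split; [apply c_nrec2; eassumption|]. apply B_AB. apply c_nrec3. assumption.
    + match goal with Hs : compat _ _ t' _ |- _ => destruct (IH _ Hs) as [t4 [Ht4 Rt4]] end.
      exists (nrec r s t4); split; [apply c_nrec3; auto| apply redAB_nrec3; auto].
  -
    intros c c' Hr c3 HA. destruct Hr.
    destruct (proj2 mren_reflA c (rho a) c3 HA) as [c1 [H1 H2]].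
    exists (named a (mu c1)). split.
    + apply cc_named, c_mu. exact H1.
    + subst. apply Bc_ABc. do 2 constructor.
  -
    intros a t t' Hb IH c3 HA. invA HA.
    match goal with Hs : compat _ _ t' _ |- _ => destruct (IH _ Hs) as [t4 [Ht4 Rt4]] end.
    exists (named a t4); split; [apply cc_named; auto| apply redABc_named; auto].
Qed.


Lemma redAB_back t u : redAB' t u -> redAB t u.
Proof.
  intro H. unfold redAB', redAB in *.
  refine (rt_map _ _ (fun x => x) _ _ _ H).
  intros x y [Hx|Hx]; [left; apply stepA_eq | right; apply stepB_eq]; auto.
Qed.

Lemma part1 (t1 t2 t3 : tm) : stepB t1 t2 -> stepA t2 t3 -> exists t4, stepA t1 t4 /\ redAB t4 t3.
Proof.
  intros HB HA. apply stepB_eq in HB. apply stepA_eq in HA.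
  destruct (proj1 main t1 t2 HB t3 HA) as [t4 [H1 H2]].
  exists t4; split; [apply stepA_eq; auto | apply redAB_back; auto].
Qed.

Theorem mainTheorem16 :
  (forall t1 t2 t3 : tm,
      stepB t1 t2 -> stepA t2 t3 ->
      exists t4, stepA t1 t4 /\ redAB t4 t3) /\
  (forall t1 t2 t3 : tm,
      redB t1 t2 -> stepA t2 t3 ->
      exists t4, stepA t1 t4 /\ redAB t4 t3).
Proof.
  split; [exact part1|].
  intros t1 t2 t3 H. apply clos_rt_rt1n in H. revert t3.
  induction H; intros t3 HA; [exists t3; split; [auto | apply rt_refl]|].
  destruct (IHclos_refl_trans_1n t3 HA) as [t4 [H1 H2]].
  destruct (part1 _ _ _ H H1) as [t5 [H3 H4]].
  exists t5; split; auto. eapply rt_trans; eauto.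
Qed.
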